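(* Let $T$ be a complete theory and $\varphi(x;y)$ a simple unstable formula of $T$ with characteristic sequence $\langle P_n:n<\omega\rangle$. If there do not exist (in a sufficiently saturated model of $T$) sets $X,Y\subseteq P_1$ forming an infinite empty pair for the edge relation $P_2$, then $\alpha(n)<\mathcal{O}(n^2)$, i.e. for every real $c_0>0$ we have $\alpha(n)<c_0n^2$ for all sufficiently large $n$.
   Context: The characteristic sequence of $\varphi(x;y)$ is given by $P_n(y_1,\dots,y_n):=\exists x\bigwedge_{i\le n}\varphi(x;y_i)$; as a standing assumption $T\vdash\forall y\exists z\forall x(\varphi(x;z)\leftrightarrow\neg\varphi(x;y))$. The $P_n$ are interpreted in a sufficiently saturated (monster) model of $T$. View $P_1$ as the vertex set of a graph with symmetric edge relation $P_2$ (loops not counted). For a finite $X\subseteq P_1$, $\hat e(X)$ is the number of unordered pairs of distinct $x,y\in X$ with $\neg P_2(x,y)$. Define $\alpha(n)=\max\{\hat e(X):X\subseteq P_1,|X|=n\}$. An infinite empty pair is a pair $(X,Y)$ with $|X|=|Y|\ge\aleph_0$ and $\neg P_2(x,y)$ for all $x\in X$, $y\in Y$. *)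

(* Defs.v *)
From Stdlib Require Import List Reals Classical ClassicalEpsilon Fin.
Import ListNotations.

Set Implicit Arguments.

Record signature := {
  fsym : Type;                      (* function symbols (constants = arity 0) *)
  farity : fsym -> nat;
  rsym : Type;
  rarity : rsym -> nat }.

Section Syntax.
Variable L : signature.

(* variables are de Bruijn indices *)
Inductive term : Type :=
  | tvar : nat -> term
  | tapp : forall f : fsym L, (Fin.t (farity L f) -> term) -> term.

Inductive formula : Type :=
  | feq  : term -> term -> formula
  | frel : forall r : rsym L, (Fin.t (rarity L r) -> term) -> formula
  | fneg : formula -> formula
  | fand : formula -> formula -> formula
  | fex  : formula -> formula.       (* binds variable 0 *)

Fixpoint tfree_below (n : nat) (t : term) : Prop :=
  match t with
  | tvar i => i < n
  | tapp f args => forall i, tfree_below n (args i)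
  end.

Fixpoint free_below (n : nat) (p : formula) : Prop :=
  match p with
  | feq t1 t2 => tfree_below n t1 /\ tfree_below n t2
  | frel r args => forall i, tfree_below n (args i)
  | fneg q => free_below n q
  | fand q1 q2 => free_below n q1 /\ free_below n q2
  | fex q => free_below (S n) q
  end.
End Syntax.

Record structure (L : signature) := {
  dom : Type;
  dom_pt : dom;
  fint : forall f : fsym L, (Fin.t (farity L f) -> dom) -> dom;
  rint : forall r : rsym L, (Fin.t (rarity L r) -> dom) -> Prop }.

Definition scons {A : Type} (a : A) (rho : nat -> A) : nat -> A :=
  fun i => match i with 0 => a | S j => rho j end.

Section Semantics.
Variables (L : signature) (M : structure L).

Fixpoint teval (rho : nat -> dom M) (t : term L) : dom M :=
  match t with
  | tvar _ i => rho i
  | tapp f args => fint M f (fun i => teval rho (args i))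
  end.

Fixpoint sat (rho : nat -> dom M) (p : formula L) : Prop :=
  match p with
  | feq t1 t2 => teval rho t1 = teval rho t2
  | frel r args => rint M r (fun i => teval rho (args i))
  | fneg q => ~ sat rho q
  | fand q1 q2 => sat rho q1 /\ sat rho q2
  | fex q => exists m, sat (scons m rho) q
  end.

(** M is aleph_1-saturated: every finitely satisfiable set of formulas in one
    free variable (variable 0) with parameters from a countable set
    A = {A 0, A 1, ...} is realized.  A pair (psi, s) stands for the
    L(A)-formula psi(x, A (s 0), A (s 1), ...), variable i+1 being sent to
    the parameter A (s i). *)
Definition aleph1_saturated : Prop :=
  forall (A : nat -> dom M) (p : formula L -> (nat -> nat) -> Prop),
    (forall l : list (formula L * (nat -> nat)),
        (forall q, In q l -> p (fst q) (snd q)) ->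
        exists b, forall q, In q l ->
          sat (scons b (fun i => A (snd q i))) (fst q)) ->
    exists b, forall psi s, p psi s -> sat (scons b (fun i => A (s i))) psi.

Variables (phi : formula L) (lx ly : nat).

(* phi(a;b), with a an lx-tuple (variables 0..lx-1) and b an ly-tuple
   (variables lx..lx+ly-1) *)
Definition phiH (a b : list (dom M)) : Prop :=
  sat (fun i => nth i (a ++ b) (dom_pt M)) phi.

Definition xtuple (a : list (dom M)) : Prop := length a = lx.
Definition ytuple (b : list (dom M)) : Prop := length b = ly.

Definition P1 (b : list (dom M)) : Prop := exists a, xtuple a /\ phiH a b.
Definition P2 (b1 b2 : list (dom M)) : Prop :=
  exists a, xtuple a /\ phiH a b1 /\ phiH a b2.

Definition negation_assumption : Prop :=
  forall b, ytuple b -> exists c, ytuple c /\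
    forall a, xtuple a -> (phiH a c <-> ~ phiH a b).

Definition unstable_formula : Prop :=
  exists (a : nat -> list (dom M)) (b : nat -> list (dom M)),
    (forall i, xtuple (a i)) /\ (forall j, ytuple (b j)) /\
    forall i j, phiH (a i) (b j) <-> i < j.

Definition k_tree_property (k : nat) : Prop :=
  exists tr : list nat -> list (dom M),
    (forall eta, ytuple (tr eta)) /\
    (forall sigma : nat -> nat, forall n, exists a, xtuple a /\
        forall m, m <= n -> phiH a (tr (map sigma (seq 0 m)))) /\
    (forall eta (l : list nat), NoDup l -> length l = k ->
        ~ exists a, xtuple a /\ forall i, In i l -> phiH a (tr (eta ++ [i]))).

Definition simple_formula : Prop := ~ exists k, k_tree_property k.

Definition vertex (b : list (dom M)) : Prop := ytuple b /\ P1 b.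

Definition decP (P : Prop) : bool :=
  if excluded_middle_informative P then true else false.

(* hat e(X): number of unordered pairs of distinct elements of X (given as a
   duplicate-free list) which are not P_2-connected *)
Fixpoint ehat (X : list (list (dom M))) : nat :=
  match X with
  | [] => 0
  | x :: X' => length (filter (fun y => decP (~ P2 x y)) X') + ehat X'
  end.

Definition vertex_set (X : list (list (dom M))) (n : nat) : Prop :=
  NoDup X /\ length X = n /\ forall x, In x X -> vertex x.

Definition is_alpha (n k : nat) : Prop :=
  (exists X, vertex_set X n /\ ehat X = k) /\
  (forall X, vertex_set X n -> ehat X <= k).

Definition infinite_empty_pair (X Y : list (dom M) -> Prop) : Prop :=
  (forall x, X x -> vertex x) /\ (forall y, Y y -> vertex y) /\
  (exists f : nat -> {x | X x}, forall i j, f i = f j -> i = j) /\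
  (exists (g : {x | X x} -> {y | Y y}) (h : {y | Y y} -> {x | X x}),
      (forall x, h (g x) = x) /\ (forall y, g (h y) = y)) /\
  (forall x y, X x -> Y y -> ~ P2 x y).

End Semantics.

(* Main.v *)
Require Import Defs.
From Stdlib Require Import ProofIrrelevance List Arith Lia PeanoNat Classical ClassicalEpsilon FunctionalExtensionality.
Import ListNotations.

Section Comb.
Variable V : Type.
Variable Nb : V -> V -> Prop.

Definition cnt (v : V) (U : list V) : nat := length (filter (fun u => decP (Nb v u)) U).
Definition cntF (F : list V) (w : V) : nat := length (filter (fun v => decP (Nb v w)) F).

Fixpoint ehatA (X : list V) : nat :=
  match X with
  | [] => 0
  | x :: X' => length (filter (fun y => decP (Nb x y)) X') + ehatA X'
  end.

Lemma decP_true : forall P : Prop, P -> decP P = true.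
Proof. intros P H. unfold decP. destruct (excluded_middle_informative P); tauto. Qed.
Lemma decP_false : forall P : Prop, ~ P -> decP P = false.
Proof. intros P H. unfold decP. destruct (excluded_middle_informative P); tauto. Qed.
Lemma decP_spec : forall P : Prop, decP P = true <-> P.
Proof. intros P. unfold decP. destruct (excluded_middle_informative P); split; intros; try tauto; discriminate. Qed.

Lemma list_sum_app : forall l1 l2, list_sum (l1 ++ l2) = list_sum l1 + list_sum l2.
Proof. induction l1; simpl; intros; auto. rewrite IHl1. lia. Qed.

Lemma sum_plus : forall (A : Type) (f g : A -> nat) l,
  list_sum (map (fun x => f x + g x) l) = list_sum (map f l) + list_sum (map g l).
Proof. induction l; simpl; auto. rewrite IHl. lia. Qed.

Lemma sum_zero : forall (A : Type) (l : list A), list_sum (map (fun _ => 0) l) = 0.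
Proof. induction l; simpl; auto. Qed.

Lemma sum_ext : forall (A : Type) (f g : A -> nat) l, (forall x, In x l -> f x = g x) ->
  list_sum (map f l) = list_sum (map g l).
Proof. intros. f_equal. apply map_ext_in. auto. Qed.

Lemma sum_le : forall (A : Type) (f g : A -> nat) l, (forall x, In x l -> f x <= g x) ->
  list_sum (map f l) <= list_sum (map g l).
Proof. induction l; simpl; intros; auto. specialize (IHl (fun x H' => H x (or_intror H'))). 
  specialize (H a (or_introl eq_refl)). lia. Qed.

Lemma sum_const_le : forall (A : Type) (f : A -> nat) l c, (forall x, In x l -> f x <= c) ->
  list_sum (map f l) <= length l * c.
Proof. induction l; simpl; intros; auto. specialize (IHl c (fun x H' => H x (or_intror H'))). 
  specialize (H a (or_introl eq_refl)). lia. Qed.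

Lemma len_filter_sum : forall (A : Type) (p : A -> bool) l,
  length (filter p l) = list_sum (map (fun x => if p x then 1 else 0) l).
Proof. induction l; simpl; auto. destruct (p a); simpl; lia. Qed.

Lemma double_count : forall F U,
  list_sum (map (cntF F) U) = list_sum (map (fun v => cnt v U) F).
Proof.
  induction F as [|v F IH]; intro U; simpl.
  - unfold cntF. simpl. apply sum_zero.
  - rewrite <- IH. unfold cnt. rewrite len_filter_sum.
    rewrite <- sum_plus. apply sum_ext. intros w _. unfold cntF. simpl.
    destruct (decP (Nb v w)); simpl; lia.
Qed.

Lemma pigeon : forall (f : V -> nat) U, U <> [] ->
  exists u, In u U /\ list_sum (map f U) <= length U * f u.
Proof.
  induction U as [|a U IH]; intros H; [congruence|].
  destruct U as [|b U'].
  - exists a. simpl. split; auto; lia.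
  - destruct IH as [u [Hu Hs]]. discriminate.
    destruct (le_lt_dec (f a) (f u)).
    + exists u. split. right; auto. simpl in *. nia.
    + exists a. split. left; auto. simpl in *. nia.
Qed.

Lemma filter_len_le : forall (A : Type) (p : A -> bool) l, length (filter p l) <= length l.
Proof. induction l; simpl; auto. destruct (p a); simpl; lia. Qed.

Lemma iter : forall n r j F U s, NoDup U -> length U <= n -> j + r <= s -> s <= length U ->
  (forall v, In v F -> s <= cnt v U) ->
  exists F' C, (forall v, In v F' -> In v F) /\ (NoDup F -> NoDup F') /\ length C = j /\
    NoDup C /\ incl C U /\ (forall v c, In v F' -> In c C -> Nb v c) /\
    length F * r ^ j <= length F' * n ^ j.
Proof.
  intros n r j. induction j as [|j IH]; intros F U s HU Hn Hjr Hs HF.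
  - exists F, []. split; [auto|split; [auto|split; [auto|split; [constructor|split]]]].
    + intros a Ha; destruct Ha.
    + split. intros v c _ Hc; destruct Hc. simpl. lia.
  - assert (HUne : U <> []). { intro. subst. simpl in Hs. lia. }
    destruct (pigeon (cntF F) U HUne) as [u [Hu Hpig]].
    rewrite double_count in Hpig.
    assert (HFs : length F * s <= list_sum (map (fun v => cnt v U) F)).
    { rewrite Nat.mul_comm. rewrite <- (map_length (fun _ => s) F) at 1.
      rewrite <- (Nat.mul_1_r s) at 1.
      assert (E : forall l : list V, s * length l = list_sum (map (fun _ => s) l)).
      { induction l as [|a l IHl]; simpl; auto. rewrite <- IHl. lia. }
      rewrite Nat.mul_1_r, length_map, E. apply sum_le. auto. }
    set (F1 := filter (fun v => decP (Nb v u)) F).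
    destruct (in_split u U Hu) as [U1 [U2 HUeq]].
    set (U' := U1 ++ U2).
    assert (HU' : NoDup U') by (apply (NoDup_remove_1 U1 U2 u); rewrite <- HUeq; auto).
    assert (HuU' : ~ In u U') by (apply (NoDup_remove_2 U1 U2 u); rewrite <- HUeq; auto).
    assert (HlenU : length U = S (length U')).
    { rewrite HUeq. unfold U'. rewrite !length_app. simpl. lia. }
    assert (Hcnt : forall v, cnt v U <= S (cnt v U')).
    { intro v. unfold cnt. rewrite HUeq. unfold U'. rewrite !filter_app, !length_app. simpl.
      destruct (decP (Nb v u)); simpl; lia. }
    destruct (IH F1 U' (s - 1)) as [F' [C [H1 [H2 [H3 [H4 [H5 [H6 H7]]]]]]]]; auto; try lia.
    { intros v Hv. unfold F1 in Hv. apply filter_In in Hv. destruct Hv as [Hv _].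
      specialize (HF v Hv). specialize (Hcnt v). lia. }
    exists F', (u :: C). split; [|split; [|split; [|split; [|split; [|split]]]]].
    + intros v Hv. apply H1 in Hv. unfold F1 in Hv. apply filter_In in Hv. tauto.
    + intro HND. apply H2. unfold F1. apply NoDup_filter; auto.
    + simpl. lia.
    + constructor; auto.
    + intros c [Hc | Hc]. subst; auto. apply H5 in Hc. rewrite HUeq. unfold U' in Hc.
      apply in_app_or in Hc. apply in_or_app. simpl. tauto.
    + intros v c Hv [Hc | Hc].
      * subst c. apply H1 in Hv. unfold F1 in Hv. apply filter_In in Hv.
        destruct Hv as [_ Hv]. apply (proj1 (decP_spec _)) in Hv. exact Hv.
      * apply H6; auto.
    + assert (HF1 : length F * s <= n * length F1).
      { assert (length F * s <= length U * cntF F u) by lia.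
        unfold cntF in H. fold F1 in H. nia. }
      simpl.
      assert (length F * r * r ^ j <= length F * s * r ^ j) by (apply Nat.mul_le_mono_r; nia).
      assert (length F * s * r ^ j <= n * length F1 * r ^ j) by (apply Nat.mul_le_mono_r; auto).
      assert (n * length F1 * r ^ j <= n * (length F' * n ^ j)) by
        (rewrite <- Nat.mul_assoc; apply Nat.mul_le_mono_l; auto).
      nia.
Qed.


Lemma ehat_le_sum : forall X W, ehatA X <= list_sum (map (fun v => cnt v (W ++ X)) X).
Proof.
  induction X as [|x X IH]; intro W; simpl; auto.
  specialize (IH (W ++ [x])). rewrite <- app_assoc in IH. simpl in IH.
  assert (length (filter (fun y => decP (Nb x y)) X) <= cnt x (W ++ x :: X)).
  { unfold cnt. rewrite filter_app, length_app. simpl. destruct (decP (Nb x x)); simpl; lia. }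
  lia.
Qed.

Lemma sum_filter_split : forall (A : Type) (f : A -> nat) (p : A -> bool) l,
  list_sum (map f l) = list_sum (map f (filter p l)) + list_sum (map f (filter (fun x => negb (p x)) l)).
Proof. induction l as [|a l IH]; simpl; auto. destruct (p a); simpl; lia. Qed.

Lemma sum_scal : forall (A : Type) (f : A -> nat) c l,
  list_sum (map (fun x => c * f x) l) = c * list_sum (map f l).
Proof. induction l as [|a l IH]; simpl; auto. rewrite IH. lia. Qed.

Lemma heavy : forall q X, 1 <= q -> 1 <= length X ->
  length X * length X <= q * ehatA X ->
  length X <= 2 * q * length (filter (fun v => decP (length X <= 2 * q * cnt v X)) X).
Proof.
  intros q X Hq Hn He. set (n := length X) in *.
  set (p := fun v => decP (n <= 2 * q * cnt v X)).
  assert (HS := ehat_le_sum X []). simpl in HS.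
  rewrite (sum_filter_split _ _ p) in HS.
  set (H := filter p X) in *. set (NH := filter (fun x => negb (p x)) X) in *.
  assert (S1 : list_sum (map (fun v => cnt v X) H) <= length H * n).
  { apply sum_const_le. intros. unfold n, cnt. apply filter_len_le. }
  assert (S2 : 2 * q * list_sum (map (fun v => cnt v X) NH) <= length NH * n).
  { rewrite <- sum_scal. apply sum_const_le. intros v Hv. unfold NH in Hv.
    apply filter_In in Hv. destruct Hv as [_ Hv]. unfold p in Hv.
    destruct (decP (n <= 2 * q * cnt v X)) eqn:E; simpl in Hv; try discriminate.
    unfold decP in E. destruct (excluded_middle_informative (n <= 2 * q * cnt v X)); try discriminate.
    lia. }
  assert (length NH <= n) by (unfold NH, n; apply filter_len_le).
  assert (n * n <= 2 * q * length H * n) by nia.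
  nia.
Qed.

Lemma NoDup_firstn' : forall (A : Type) (l : list A) k, NoDup l -> NoDup (firstn k l).
Proof.
  intros A l k H. rewrite <- (firstn_skipn k l) in H. eapply NoDup_app_remove_r. eauto.
Qed.

Lemma KST : forall q m, 1 <= q -> exists N0, forall X, NoDup X -> N0 <= length X ->
  length X * length X <= q * ehatA X ->
  exists S C, length S = m /\ length C = m /\ NoDup S /\ NoDup C /\ incl S X /\ incl C X /\
    (forall v c, In v S -> In c C -> Nb v c).
Proof.
  intros q m Hq.
  set (D := 8 * q). set (T := (2 * D) ^ m).
  exists (D * (m + 1) + m * (T * (2 * q)) + 1).
  intros X HND HN He. set (n := length X) in *.
  set (r := n / D). set (s := n / (2 * q)).
  assert (HD : D <> 0) by (unfold D; lia).
  assert (R1 : D * r <= n) by apply Nat.Div0.mul_div_le.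
  assert (R2 : n < D * S r) by (apply Nat.mul_succ_div_gt; auto).
  assert (S1 : 2 * q * s <= n) by apply Nat.Div0.mul_div_le.
  assert (S2 : n < 2 * q * S s) by (apply Nat.mul_succ_div_gt; lia).
  assert (Hrm : m + 1 <= r).
  { destruct (le_lt_dec (m + 1) r); auto.
    assert (D * S r <= D * (m + 1)) by (apply Nat.mul_le_mono_l; lia). lia. }
  assert (Hrs : 4 * r <= s).
  { unfold D in R1. destruct (le_lt_dec (4 * r) s); auto.
    assert (2 * q * S s <= 2 * q * (4 * r)) by (apply Nat.mul_le_mono_l; lia). lia. }
  assert (Hsn : s <= n) by nia.
  set (H := filter (fun v => decP (n <= 2 * q * cnt v X)) X).
  assert (HH : n <= 2 * q * length H) by (apply heavy; auto; lia).
  destruct (iter n r m H X s) as [F' [C [H1 [H2 [H3 [H4 [H5 [H6 H7]]]]]]]]; auto; try lia.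
  { intros v Hv. unfold H in Hv. apply filter_In in Hv. destruct Hv as [_ Hv].
    apply (proj1 (decP_spec _)) in Hv. nia. }
  assert (HF' : m <= length F').
  { destruct (le_lt_dec m (length F')); auto. exfalso.
    assert (Hn2 : n <= 2 * D * r) by nia.
    assert (Hpow : n ^ m <= T * r ^ m).
    { unfold T. rewrite <- Nat.pow_mul_l. apply Nat.pow_le_mono_l. lia. }
    assert (HP : 0 < r ^ m) by (apply Nat.neq_0_lt_0, Nat.pow_nonzero; lia).
    set (P := r ^ m) in *. set (Q := n ^ m) in *.
    assert (n * P <= 2 * q * length H * P) by (apply Nat.mul_le_mono_r; auto).
    assert (2 * q * length H * P <= 2 * q * (length F' * Q)) by
      (rewrite <- Nat.mul_assoc; apply Nat.mul_le_mono_l; auto).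
    assert (2 * q * (length F' * Q) <= 2 * q * (length F' * (T * P))) by
      (apply Nat.mul_le_mono_l, Nat.mul_le_mono_l; auto).
    assert (n <= 2 * q * (length F' * T)) by nia.
    assert (2 * q * (length F' * T) <= 2 * q * ((m - 1) * T)) by
      (apply Nat.mul_le_mono_l, Nat.mul_le_mono_r; lia).
    destruct m. lia. nia. }
  assert (HFX : incl F' X).
  { intros v Hv. apply H1 in Hv. unfold H in Hv. apply filter_In in Hv. tauto. }
  exists (firstn m F'), C. split; [|split; [|split; [|split; [|split; [|split]]]]].
  - apply firstn_length_le; auto.
  - auto.
  - apply NoDup_firstn'. apply H2. unfold H. apply NoDup_filter. auto.
  - auto.
  - intros v Hv. apply HFX. rewrite <- (firstn_skipn m F'). apply in_or_app. auto.
  - auto.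
  - intros v c Hv Hc. apply H6; auto.
    rewrite <- (firstn_skipn m F'). apply in_or_app. auto.
Qed.

End Comb.


Section Syn.
Variable L : signature.
Variable M : structure L.

Fixpoint tren (s : nat -> nat) (t : term L) : term L :=
  match t with
  | tvar _ i => tvar L (s i)
  | tapp f args => tapp f (fun i => tren s (args i))
  end.

Definition upr (s : nat -> nat) : nat -> nat :=
  fun i => match i with 0 => 0 | S j => S (s j) end.

Fixpoint fren (s : nat -> nat) (p : formula L) : formula L :=
  match p with
  | feq t1 t2 => feq (tren s t1) (tren s t2)
  | frel r args => frel r (fun i => tren s (args i))
  | fneg q => fneg (fren s q)
  | fand q1 q2 => fand (fren s q1) (fren s q2)
  | fex q => fex (fren (upr s) q)
  end.

Lemma teval_ren : forall t s rho,
  teval M rho (tren s t) = teval M (fun i => rho (s i)) t.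
Proof.
  induction t as [n | f args IH]; intros s rho; simpl; auto.
  f_equal. apply functional_extensionality. intro i. apply IH.
Qed.

Lemma sat_ren : forall p s rho,
  sat M rho (fren s p) <-> sat M (fun i => rho (s i)) p.
Proof.
  induction p as [t1 t2 | r args | q IH | q1 IH1 q2 IH2 | q IH]; intros s rho; simpl.
  - rewrite !teval_ren. tauto.
  - replace (fun i => teval M rho (tren s (args i))) with
      (fun i => teval M (fun i0 => rho (s i0)) (args i)); [tauto|].
    apply functional_extensionality. intro i. rewrite teval_ren. auto.
  - rewrite IH. tauto.
  - rewrite IH1, IH2. tauto.
  - split; intros [m Hm]; exists m.
    + apply IH in Hm.
      replace (scons m (fun i => rho (s i))) with (fun i => scons m rho (upr s i)); auto.
      apply functional_extensionality. intros [|i]; reflexivity.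
    + apply IH.
      replace (fun i => scons m rho (upr s i)) with (scons m (fun i => rho (s i))); auto.
      apply functional_extensionality. intros [|i]; reflexivity.
Qed.

Lemma teval_coinc : forall t n rho rho',
  tfree_below n t -> (forall i, i < n -> rho i = rho' i) ->
  teval M rho t = teval M rho' t.
Proof.
  induction t as [k | f args IH]; intros n rho rho' Hf Ha; simpl in *; auto.
  f_equal. apply functional_extensionality. intro i. eapply IH; eauto.
Qed.

Lemma sat_coinc : forall p n rho rho',
  free_below n p -> (forall i, i < n -> rho i = rho' i) ->
  (sat M rho p <-> sat M rho' p).
Proof.
  induction p as [t1 t2 | r args | q IH | q1 IH1 q2 IH2 | q IH];
    intros n rho rho' Hf Ha; simpl in *.
  - destruct Hf. erewrite (teval_coinc t1), (teval_coinc t2); eauto; tauto.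
  - replace (fun i => teval M rho (args i)) with (fun i => teval M rho' (args i)); [tauto|].
    apply functional_extensionality. intro i. symmetry. eapply teval_coinc; eauto.
  - rewrite (IH n rho rho'); auto; tauto.
  - destruct Hf. rewrite (IH1 n rho rho'), (IH2 n rho rho'); auto; tauto.
  - split; intros [m Hm]; exists m.
    + apply (IH (S n) (scons m rho)); auto. intros [|i] Hi; simpl; auto. apply Ha; lia.
    + apply (IH (S n) (scons m rho) (scons m rho')); auto. intros [|i] Hi; simpl; auto. apply Ha; lia.
Qed.

Definition Def (R : (nat -> dom M) -> Prop) : Prop :=
  exists psi : formula L, forall rho, R rho <-> sat M rho psi.

Lemma Def_sat : forall psi, Def (fun rho => sat M rho psi).
Proof. intro psi. exists psi. tauto. Qed.

Lemma Def_ext : forall R R', Def R -> (forall rho, R rho <-> R' rho) -> Def R'.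
Proof. intros R R' [psi H] H'. exists psi. intro rho. rewrite <- H'. auto. Qed.

Lemma Def_and : forall R1 R2, Def R1 -> Def R2 -> Def (fun rho => R1 rho /\ R2 rho).
Proof.
  intros R1 R2 [p1 H1] [p2 H2]. exists (fand p1 p2). intro rho. simpl. rewrite H1, H2. tauto.
Qed.

Lemma Def_not : forall R, Def R -> Def (fun rho => ~ R rho).
Proof. intros R [p H]. exists (fneg p). intro rho. simpl. rewrite H. tauto. Qed.

Lemma Def_eq : forall i j, Def (fun rho => rho i = rho j).
Proof. intros i j. exists (feq (tvar L i) (tvar L j)). intro. simpl. tauto. Qed.

Lemma Def_const : forall P : Prop, Def (fun _ => P).
Proof.
  intro P. destruct (classic P) as [HP | HP].
  - exists (feq (tvar L 0) (tvar L 0)). intro; simpl; split; auto.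
  - exists (fneg (feq (tvar L 0) (tvar L 0))). intro; simpl; split; intros; try tauto.
Qed.

Lemma Def_impl : forall R1 R2, Def R1 -> Def R2 -> Def (fun rho => R1 rho -> R2 rho).
Proof.
  intros R1 R2 H1 H2. eapply Def_ext. apply Def_not. apply Def_and. exact H1. apply Def_not. exact H2.
  intro rho. simpl. split; intros. destruct (classic (R2 rho)); tauto. tauto.
Qed.

Lemma Def_ren : forall R (s : nat -> nat), Def R -> Def (fun rho => R (fun i => rho (s i))).
Proof.
  intros R s [p H]. exists (fren s p). intro rho. rewrite sat_ren. apply H.
Qed.

Lemma Def_ex1 : forall R, Def R -> Def (fun rho => exists m, R (scons m rho)).
Proof.
  intros R [p H]. exists (fex p). intro rho. simpl. split; intros [m Hm]; exists m; apply H; auto.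
Qed.

Definition lenv (l : list (dom M)) (rho : nat -> dom M) : nat -> dom M :=
  fun i => if i <? length l then nth i l (dom_pt M) else rho (i - length l).

Lemma Def_exl : forall k R, Def R ->
  Def (fun rho => exists l, length l = k /\ R (lenv l rho)).
Proof.
  induction k as [|k IH]; intros R HR.
  - eapply Def_ext. exact HR. intro rho. split.
    + intro H. exists []. split; auto. replace (lenv [] rho) with rho; auto.
      apply functional_extensionality. intro i. unfold lenv. simpl. f_equal. lia.
    + intros [l [Hl H]]. destruct l; simpl in Hl; try lia.
      replace rho with (lenv [] rho); auto.
      apply functional_extensionality. intro i. unfold lenv. simpl. f_equal. lia.
  - eapply Def_ext. apply Def_ex1. apply (IH _ HR). intro rho. split.
    + intros [m [l [Hl H]]]. exists (l ++ [m]). split.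
      rewrite length_app; simpl; lia.
      replace (lenv (l ++ [m]) rho) with (lenv l (scons m rho)); auto.
      apply functional_extensionality. intro i. unfold lenv. rewrite length_app. simpl.
      destruct (Nat.ltb_spec i (length l)); destruct (Nat.ltb_spec i (length l + 1)); try lia.
      * rewrite app_nth1; auto.
      * assert (i = length l) by lia. subst. rewrite Nat.sub_diag. simpl.
        rewrite app_nth2; try lia. rewrite Nat.sub_diag. reflexivity.
      * replace (i - length l) with (S (i - (length l + 1))) by lia. reflexivity.
    + intros [l [Hl H]].
      destruct (@exists_last _ l) as [l' [m Hlm]]. destruct l; simpl in Hl; try lia; congruence.
      subst l. rewrite length_app in Hl. simpl in Hl.
      exists m, l'. split. lia.
      replace (lenv l' (scons m rho)) with (lenv (l' ++ [m]) rho); auto.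
      apply functional_extensionality. intro i. unfold lenv. rewrite length_app. simpl.
      destruct (Nat.ltb_spec i (length l')); destruct (Nat.ltb_spec i (length l' + 1)); try lia.
      * rewrite app_nth1; auto.
      * assert (i = length l') by lia. subst. rewrite Nat.sub_diag. simpl.
        rewrite app_nth2; try lia. rewrite Nat.sub_diag. reflexivity.
      * replace (i - length l') with (S (i - (length l' + 1))) by lia. reflexivity.
Qed.

Lemma Def_all_lt : forall K (R : nat -> (nat -> dom M) -> Prop),
  (forall i, Def (R i)) -> Def (fun rho => forall i, i < K -> R i rho).
Proof.
  induction K as [|K IH]; intros R HR.
  - eapply Def_ext. apply (Def_const True). intro. split; intros; try lia; auto.
  - eapply Def_ext. apply Def_and. apply (IH R HR). apply (HR K).
    intro rho. split.
    + intros [H1 H2] i Hi. destruct (Nat.eq_dec i K). subst; auto. apply H1; lia.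
    + intros H. split; auto.
Qed.

Lemma lenv_map_seq0 : forall l rho, map (lenv l rho) (seq 0 (length l)) = l.
Proof.
  intros l rho. apply nth_ext with (d := dom_pt M) (d' := dom_pt M).
  rewrite length_map, length_seq; auto.
  intros n Hn. rewrite length_map, length_seq in Hn.
  rewrite nth_indep with (d' := lenv l rho 0) by (rewrite length_map, length_seq; auto).
  rewrite map_nth, seq_nth by auto. unfold lenv. simpl.
  destruct (Nat.ltb_spec n (length l)); try lia. auto.
Qed.


Lemma map_seq_shift : forall (f : nat -> dom M) n q k,
  map f (seq (n + q) k) = map (fun i => f (n + i)) (seq q k).
Proof.
  intros f n q k. revert q. induction k as [|k IH]; intro q; simpl; auto.
  f_equal. replace (S (n + q)) with (n + S q) by lia. apply IH.
Qed.

Lemma lenv_map_shift : forall l rho q k,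
  map (lenv l rho) (seq (length l + q) k) = map rho (seq q k).
Proof.
  intros. rewrite map_seq_shift. apply map_ext_in. intros a Ha.
  unfold lenv. destruct (Nat.ltb_spec (length l + a) (length l)); try lia. f_equal. lia.
Qed.

Lemma nth_map_seq : forall (f : nat -> dom M) p k i d, i < k ->
  nth i (map f (seq p k)) d = f (p + i).
Proof.
  intros f p k i d Hi. rewrite nth_indep with (d' := f 0) by (rewrite length_map, length_seq; auto).
  rewrite map_nth, seq_nth by auto. f_equal. 
Qed.

Variable phi : formula L.
Variables lx ly : nat.
Hypothesis Hfree : free_below (lx + ly) phi.

Definition tup (rho : nat -> dom M) (p : nat) : list (dom M) := map rho (seq p ly).

Lemma phiH_env : forall rho p q,
  phiH M phi (map rho (seq p lx)) (tup rho q) <->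
  sat M (fun c => rho (if c <? lx then p + c else q + (c - lx))) phi.
Proof.
  intros rho p q. unfold phiH, tup. apply (sat_coinc phi (lx + ly)); auto.
  intros i Hi. destruct (Nat.ltb_spec i lx).
  - rewrite app_nth1 by (rewrite length_map, length_seq; auto). apply nth_map_seq; auto.
  - rewrite app_nth2 by (rewrite length_map, length_seq; auto).
    rewrite length_map, length_seq. apply nth_map_seq. lia.
Qed.

Lemma Def_phiH : forall p q, Def (fun rho => phiH M phi (map rho (seq p lx)) (tup rho q)).
Proof.
  intros p q. eapply Def_ext.
  apply (Def_ren (fun rho => sat M rho phi) (fun c => if c <? lx then p + c else q + (c - lx))).
  apply Def_sat. intro rho. simpl. rewrite phiH_env. tauto.
Qed.

Lemma Def_P1 : forall q, Def (fun rho => P1 M phi lx (tup rho q)).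
Proof.
  intro q. eapply Def_ext. apply (Def_exl lx). apply (Def_phiH 0 (lx + q)).
  intro rho. unfold P1, xtuple. split.
  - intros [l [Hl H]]. exists l. split; auto. rewrite <- Hl in H.
    rewrite lenv_map_seq0 in H. unfold tup in H. rewrite lenv_map_shift in H. auto.
  - intros [l [Hl H]]. exists l. split; auto. rewrite <- Hl.
    rewrite lenv_map_seq0. unfold tup. rewrite lenv_map_shift. auto.
Qed.

Lemma Def_P2 : forall q1 q2, Def (fun rho => P2 M phi lx (tup rho q1) (tup rho q2)).
Proof.
  intros q1 q2. eapply Def_ext. apply (Def_exl lx).
  apply Def_and. apply (Def_phiH 0 (lx + q1)). apply (Def_phiH 0 (lx + q2)).
  intro rho. unfold P2, xtuple. split.
  - intros [l [Hl H]]. exists l. split; auto. rewrite <- Hl in H.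
    rewrite lenv_map_seq0 in H. unfold tup in H. rewrite !lenv_map_shift in H. auto.
  - intros [l [Hl H]]. exists l. split; auto. rewrite <- Hl.
    rewrite lenv_map_seq0. unfold tup. rewrite !lenv_map_shift. auto.
Qed.

Lemma Def_vertex : forall q, Def (fun rho => vertex M phi lx ly (tup rho q)).
Proof.
  intro q. eapply Def_ext. apply (Def_P1 q). intro rho. unfold vertex, ytuple, tup.
  rewrite length_map, length_seq. tauto.
Qed.

Lemma tup_eq_iff : forall rho p q,
  tup rho p = tup rho q <-> (forall c, c < ly -> rho (p + c) = rho (q + c)).
Proof.
  intros rho p q. unfold tup. split.
  - intros H c Hc. rewrite <- (nth_map_seq rho p ly c (dom_pt M)), <- (nth_map_seq rho q ly c (dom_pt M)); auto.
    rewrite H; auto.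
  - intro H. apply nth_ext with (d := dom_pt M) (d' := dom_pt M).
    rewrite !length_map, !length_seq; auto.
    intros n Hn. rewrite length_map, length_seq in Hn. rewrite !nth_map_seq; auto.
Qed.

Lemma Def_tupneq : forall p q, Def (fun rho => tup rho p <> tup rho q).
Proof.
  intros p q. eapply Def_ext. apply Def_not.
  apply (Def_all_lt ly (fun c rho => rho (p + c) = rho (q + c))). intro c. apply Def_eq.
  intro rho. rewrite tup_eq_iff. tauto.
Qed.

Definition validf (N : nat) (f : nat -> dom M) : Prop :=
  (forall i, i < 2 * (N / (2 * ly)) -> vertex M phi lx ly (tup f (i * ly))) /\
  (forall i j, i < (N / (2 * ly)) -> j < (N / (2 * ly)) -> i <> j ->
     tup f (2 * i * ly) <> tup f (2 * j * ly) /\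
     tup f ((2 * i + 1) * ly) <> tup f ((2 * j + 1) * ly)) /\
  (forall i j, i < (N / (2 * ly)) -> j < (N / (2 * ly)) -> ~ P2 M phi lx (tup f (2 * i * ly)) (tup f ((2 * j + 1) * ly))).

Lemma Def_validf : forall N, Def (validf N).
Proof.
  intro N. unfold validf. apply Def_and; [|apply Def_and].
  - apply (Def_all_lt _ (fun i rho => vertex M phi lx ly (tup rho (i * ly)))).
    intro i. apply Def_vertex.
  - eapply Def_ext.
    apply (Def_all_lt (N / (2 * ly)) (fun i rho => forall j, j < N / (2 * ly) -> i <> j ->
       tup rho (2 * i * ly) <> tup rho (2 * j * ly) /\
       tup rho ((2 * i + 1) * ly) <> tup rho ((2 * j + 1) * ly))).
    intro i. apply (Def_all_lt _ (fun j rho => i <> j ->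
       tup rho (2 * i * ly) <> tup rho (2 * j * ly) /\
       tup rho ((2 * i + 1) * ly) <> tup rho ((2 * j + 1) * ly))).
    intro j. apply Def_impl. apply Def_const. apply Def_and; apply Def_tupneq.
    intro rho. split; intros H i j; [intros Hi Hj|intros Hi Hj]; apply H; auto.
  - eapply Def_ext.
    apply (Def_all_lt (N / (2 * ly)) (fun i rho => forall j, j < N / (2 * ly) ->
       ~ P2 M phi lx (tup rho (2 * i * ly)) (tup rho ((2 * j + 1) * ly)))).
    intro i. apply (Def_all_lt _ (fun j rho => 
       ~ P2 M phi lx (tup rho (2 * i * ly)) (tup rho ((2 * j + 1) * ly)))).
    intro j. apply Def_not. apply Def_P2.
    intro rho. split; intros H i j; [intros Hi Hj|intros Hi Hj]; apply H; auto.
Qed.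


Definition nthf (E : list (dom M)) : nat -> dom M := fun i => nth i E (dom_pt M).
Definition valid (E : list (dom M)) : Prop := validf (length E) (nthf E).
Definition Good (m : nat) (E : list (dom M)) : Prop :=
  exists ext, length ext = 2 * m * ly /\ valid (E ++ ext).
Definition Inv (E : list (dom M)) : Prop := forall m, Good m E.

Lemma tup_agree : forall f g p, (forall c, c < ly -> f (p + c) = g (p + c)) -> tup f p = tup g p.
Proof.
  intros f g p H. unfold tup. apply map_ext_in.
  intros a Ha. apply in_seq in Ha. replace a with (p + (a - p)) by lia. apply H. lia.
Qed.

Lemma validf_agree : forall N N' f g, validf N f -> N' <= N ->
  (forall i, i < N' -> f i = g i) -> validf N' g.
Proof.
  intros N N' f g [V1 [V2 V3]] HN Hfg.
  destruct (Nat.eq_dec ly 0) as [H0 | Hly].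
  { unfold validf. rewrite H0. simpl. repeat split; intros; lia. }
  assert (HK : N' / (2 * ly) <= N / (2 * ly)) by (apply Nat.Div0.div_le_mono; auto).
  assert (HB : 2 * ly * (N' / (2 * ly)) <= N') by apply Nat.Div0.mul_div_le.
  assert (Ht : forall i, i < 2 * (N' / (2 * ly)) -> tup f (i * ly) = tup g (i * ly)).
  { intros i Hi. apply tup_agree. intros c Hc. apply Hfg. nia. }
  unfold validf. split; [|split].
  - intros i Hi. rewrite <- Ht by auto. apply V1. lia.
  - intros i j Hi Hj Hij.
    rewrite <- (Ht (2 * i)), <- (Ht (2 * j)), <- (Ht (2 * i + 1)), <- (Ht (2 * j + 1)) by lia.
    apply V2; auto; lia.
  - intros i j Hi Hj.
    replace (2 * i * ly) with ((2 * i) * ly) by lia.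
    rewrite <- (Ht (2 * i)), <- (Ht (2 * j + 1)) by lia. apply V3; lia.
Qed.

Lemma valid_firstn : forall E ext k, k <= length ext -> valid (E ++ ext) -> valid (E ++ firstn k ext).
Proof.
  intros E ext k Hk Hv. unfold valid in *. eapply validf_agree. exact Hv.
  rewrite !length_app, firstn_length_le by auto. lia.
  intros i Hi. rewrite length_app, firstn_length_le in Hi by auto. unfold nthf.
  destruct (Nat.ltb_spec i (length E)).
  - rewrite !app_nth1; auto.
  - rewrite !app_nth2 by lia. rewrite nth_firstn. destruct (Nat.ltb_spec (i - length E) k); auto; lia.
Qed.

Lemma Good_mono : forall m E, Good (S m) E -> Good m E.
Proof.
  intros m E [ext [Hl Hv]]. exists (firstn (2 * m * ly) ext). split.
  apply firstn_length_le. nia. apply valid_firstn; auto. nia.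
Qed.

Lemma Good_step : 0 < ly -> forall m E, Good (S m) E -> exists b, Good m (E ++ [b]).
Proof.
  intros Hly m E [ext [Hl Hv]]. destruct ext as [|b ext']. simpl in Hl. nia.
  exists b, (firstn (2 * m * ly) ext'). split.
  apply firstn_length_le. simpl in Hl. nia.
  rewrite <- app_assoc. simpl. change (b :: firstn (2 * m * ly) ext') with (firstn (S (2 * m * ly)) (b :: ext')).
  apply (valid_firstn E (b :: ext') (S (2 * m * ly))); auto. simpl in *. nia.
Qed.

Lemma map_nth_seq0 : forall (E : list (dom M)), map (fun i => nth i E (dom_pt M)) (seq 0 (length E)) = E.
Proof.
  intros E. apply nth_ext with (d := dom_pt M) (d' := dom_pt M).
  rewrite length_map, length_seq; auto.
  intros n Hn. rewrite length_map, length_seq in Hn. rewrite nth_map_seq; auto.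
Qed.

Definition Rm (k m : nat) (rho : nat -> dom M) : Prop :=
  Good m (map (fun i => rho (S i)) (seq 0 k) ++ [rho 0]).

Lemma Def_Rm : forall k m, Def (Rm k m).
Proof.
  intros k m. set (L0 := 2 * m * ly). set (N := k + 1 + L0).
  set (tau := fun i => if i <? k then L0 + S i else if i =? k then L0 else i - (k + 1)).
  eapply Def_ext. apply (Def_exl L0). apply (Def_ren (validf N) tau). apply Def_validf.
  intro rho. unfold Rm, Good, valid. 
  assert (Hlen : forall ext : list (dom M), length ext = L0 ->
     length ((map (fun i => rho (S i)) (seq 0 k) ++ [rho 0]) ++ ext) = N).
  { intros. rewrite !length_app, length_map, length_seq. simpl. unfold N. lia. }
  assert (Hag : forall ext : list (dom M), length ext = L0 -> forall i, i < N ->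
     lenv ext rho (tau i) = nthf ((map (fun i => rho (S i)) (seq 0 k) ++ [rho 0]) ++ ext) i).
  { intros ext Hext i Hi. unfold tau, lenv, nthf. rewrite Hext.
    destruct (Nat.ltb_spec i k).
    - destruct (Nat.ltb_spec (L0 + S i) L0); try lia.
      rewrite app_nth1 by (rewrite length_app, length_map, length_seq; simpl; lia).
      rewrite app_nth1 by (rewrite length_map, length_seq; lia).
      rewrite nth_map_seq by auto. f_equal. lia.
    - destruct (Nat.eqb_spec i k).
      + subst i. destruct (Nat.ltb_spec L0 L0); try lia.
        rewrite app_nth1 by (rewrite length_app, length_map, length_seq; simpl; lia).
        rewrite app_nth2 by (rewrite length_map, length_seq; lia).
        rewrite length_map, length_seq, !Nat.sub_diag. reflexivity.
      + destruct (Nat.ltb_spec (i - (k + 1)) L0); try (unfold N in Hi; lia).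
        rewrite app_nth2 by (rewrite length_app, length_map, length_seq; simpl; lia).
        rewrite length_app, length_map, length_seq. simpl. f_equal. }
  split.
  - intros [ext [Hl Hv]]. exists ext. split; auto. rewrite Hlen by auto.
    eapply validf_agree. exact Hv. auto. intros i Hi. apply Hag; auto.
  - intros [ext [Hl Hv]]. exists ext. split; auto. fold L0 in Hl. rewrite Hlen in Hv by auto.
    eapply validf_agree. exact Hv. auto. intros i Hi. symmetry. apply Hag; auto.
Qed.

Lemma sat_chain : aleph1_saturated M ->
  forall (A : nat -> dom M) (R : nat -> (nat -> dom M) -> Prop),
  (forall m, Def (R m)) -> (forall m rho, R (S m) rho -> R m rho) ->
  (forall m, exists b, R m (scons b A)) -> exists b, forall m, R m (scons b A).
Proof.
  intros Hsat A R HD Hmono Hfin.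
  set (psi := fun m => proj1_sig (constructive_indefinite_description _ (HD m))).
  assert (Hpsi : forall m rho, R m rho <-> sat M rho (psi m)).
  { intro m. unfold psi. destruct (constructive_indefinite_description _ (HD m)). simpl. auto. }
  assert (Hmono' : forall m m' rho, m <= m' -> R m' rho -> R m rho).
  { intros m m' rho Hle. induction Hle; auto. }
  destruct (Hsat A (fun p s => s = (fun i => i) /\ exists m, p = psi m)) as [b Hb].
  - intros l Hl.
    assert (Hbound : exists K, forall q, In q l -> exists m, m <= K /\ fst q = psi m /\ snd q = (fun i => i)).
    { clear Hfin. induction l as [|q l IH].
      - exists 0. intros q [].
      - destruct IH as [K HK]. intros q' Hq'. apply Hl. right; auto.
        destruct (Hl q (or_introl eq_refl)) as [Hs [m Hm]].
        exists (Nat.max K m). intros q' [Hq' | Hq'].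
        + subst q'. exists m. repeat split; auto. lia.
        + destruct (HK q' Hq') as [m' [Hm' Hq]]. exists m'. split; auto. lia. }
    destruct Hbound as [K HK]. destruct (Hfin K) as [b Hb]. exists b.
    intros q Hq. destruct (HK q Hq) as [m [Hm [H1 H2]]]. rewrite H1, H2.
    apply Hpsi. eapply Hmono'. exact Hm. exact Hb.
  - exists b. intro m. apply Hpsi. apply (Hb (psi m) (fun i => i)). split; auto. exists m; auto.
Qed.

Lemma Rm_scons : forall E m b, Rm (length E) m (scons b (nthf E)) <-> Good m (E ++ [b]).
Proof.
  intros E m b. unfold Rm. simpl.
  replace (map (fun i => nthf E i) (seq 0 (length E))) with E. tauto.
  symmetry. apply map_nth_seq0.
Qed.

Lemma Inv_step : aleph1_saturated M -> 0 < ly -> forall E, Inv E -> exists b, Inv (E ++ [b]).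
Proof.
  intros Hsat Hly E HE.
  destruct (sat_chain Hsat (nthf E) (Rm (length E))) as [b Hb].
  - intro m. apply Def_Rm.
  - intros m rho H. unfold Rm in *. apply Good_mono. auto.
  - intro m. destruct (Good_step Hly m E (HE (S m))) as [b Hb]. exists b. apply Rm_scons. auto.
  - exists b. intro m. apply Rm_scons. auto.
Qed.

Lemma stream_exists : aleph1_saturated M -> 0 < ly -> Inv [] ->
  exists e : nat -> dom M, forall n, validf n e.
Proof.
  intros Hsat Hly H0.
  set (x0 := exist Inv [] H0).
  set (stepf := fun x : {E | Inv E} =>
     exist Inv (proj1_sig x ++ [proj1_sig (constructive_indefinite_description _
                     (Inv_step Hsat Hly (proj1_sig x) (proj2_sig x)))])
       (proj2_sig (constructive_indefinite_description _
                     (Inv_step Hsat Hly (proj1_sig x) (proj2_sig x))))).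
  set (st := fun n => Nat.iter n stepf x0).
  assert (Hstep : forall x, exists b, proj1_sig (stepf x) = proj1_sig x ++ [b])
    by (intro x; eexists; reflexivity).
  assert (Hlen : forall n, length (proj1_sig (st n)) = n).
  { induction n as [|n IH]; [reflexivity|].
    change (st (S n)) with (stepf (st n)). destruct (Hstep (st n)) as [b Hb].
    transitivity (length (proj1_sig (st n) ++ [b])). f_equal. exact Hb.
    rewrite length_app, IH. simpl. lia. }
  assert (Hpre : forall n j, exists F, proj1_sig (st (j + n)) = proj1_sig (st n) ++ F).
  { intros n j. induction j as [|j IH].
    - exists []. rewrite app_nil_r. auto.
    - destruct IH as [F HF]. destruct (Hstep (st (j + n))) as [b Hb]. exists (F ++ [b]).
      change (st (S j + n)) with (stepf (st (j + n))).
      transitivity (proj1_sig (st (j + n)) ++ [b]). exact Hb. rewrite HF, app_assoc. reflexivity. }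
  set (e := fun i => nth i (proj1_sig (st (S i))) (dom_pt M)).
  assert (Hag : forall n i, i < n -> nth i (proj1_sig (st n)) (dom_pt M) = e i).
  { intros n i Hi. destruct (Hpre (S i) (n - S i)) as [F HF].
    replace (n - S i + S i) with n in HF by lia. rewrite HF. unfold e.
    rewrite app_nth1; auto. rewrite Hlen. lia. }
  exists e. intro n.
  destruct (proj2_sig (st n) 0) as [ext [Hl Hv]].
  destruct ext; simpl in Hl; try lia. rewrite app_nil_r in Hv. unfold valid in Hv.
  rewrite Hlen in Hv. eapply validf_agree. exact Hv. auto.
  intros i Hi. unfold nthf. apply Hag. auto.
Qed.


Lemma divmod_blk : forall b c, c < ly -> (b * ly + c) / ly = b /\ (b * ly + c) mod ly = c.
Proof.
  intros b c Hc. split.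
  - symmetry. apply (Nat.div_unique _ _ _ c); auto. lia.
  - symmetry. apply (Nat.mod_unique _ _ b c); auto. lia.
Qed.

Lemma blk_tup : forall (T : nat -> list (dom M)) n, (forall b, b < n -> length (T b) = ly) ->
  forall b, b < n ->
  tup (nthf (map (fun p => nth (p mod ly) (T (p / ly)) (dom_pt M)) (seq 0 (n * ly)))) (b * ly) = T b.
Proof.
  intros T n HT b Hb. apply nth_ext with (d := dom_pt M) (d' := dom_pt M).
  unfold tup. rewrite length_map, length_seq, HT; auto.
  intros c Hc. unfold tup in Hc. rewrite length_map, length_seq in Hc.
  unfold tup. rewrite nth_map_seq by auto. unfold nthf.
  rewrite (nth_map_seq (fun p => nth (p mod ly) (T (p / ly)) (dom_pt M)) 0 (n * ly) (b * ly + c)) by nia.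
  simpl. destruct (divmod_blk b c Hc) as [H1 H2]. rewrite H1, H2. reflexivity.
Qed.

Lemma Inv_nil : 0 < ly ->
  (forall m, exists xs ys, length xs = m /\ length ys = m /\ NoDup xs /\ NoDup ys /\
     (forall x, In x xs -> vertex M phi lx ly x) /\ (forall y, In y ys -> vertex M phi lx ly y) /\
     (forall x y, In x xs -> In y ys -> ~ P2 M phi lx x y)) -> Inv [].
Proof.
  intros Hly Hcfg m.
  destruct (Hcfg m) as [xs [ys [Hx [Hy [Nx [Ny [Vx [Vy Cr]]]]]]]].
  set (T := fun b => if b mod 2 =? 0 then nth (b / 2) xs [] else nth (b / 2) ys []).
  assert (T0 : forall i, T (2 * i) = nth i xs []).
  { intro i. unfold T. replace ((2 * i) mod 2) with 0 by (apply (Nat.mod_unique _ _ i); lia).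
    replace ((2 * i) / 2) with i by (apply (Nat.div_unique _ _ _ 0); lia). reflexivity. }
  assert (T1 : forall i, T (2 * i + 1) = nth i ys []).
  { intro i. unfold T. replace ((2 * i + 1) mod 2) with 1 by (apply (Nat.mod_unique _ _ i); lia).
    replace ((2 * i + 1) / 2) with i by (apply (Nat.div_unique _ _ _ 1); lia). reflexivity. }
  assert (TV : forall b, b < 2 * m -> vertex M phi lx ly (T b)).
  { intros b Hb. assert (b / 2 < m) by (apply Nat.Div0.div_lt_upper_bound; lia).
    unfold T. destruct (b mod 2 =? 0).
    - apply Vx. apply nth_In. lia.
    - apply Vy. apply nth_In. lia. }
  assert (TL : forall b, b < 2 * m -> length (T b) = ly).
  { intros b Hb. apply TV in Hb. destruct Hb as [Hb _]. exact Hb. }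
  exists (map (fun p => nth (p mod ly) (T (p / ly)) (dom_pt M)) (seq 0 (2 * m * ly))).
  split. rewrite length_map, length_seq. auto.
  unfold valid, validf. rewrite app_nil_l, length_map, length_seq.
  replace (2 * m * ly / (2 * ly)) with m by (apply (Nat.div_unique _ _ _ 0); lia).
  assert (HB := blk_tup T (2 * m) TL).
  split; [|split].
  - intros i Hi. rewrite HB by lia. apply TV. lia.
  - intros i j Hi Hj Hij. rewrite !HB by lia. rewrite T0, T0, T1, T1. split.
    + intro E. apply Hij. apply (proj1 (NoDup_nth xs [])) in E; auto; lia.
    + intro E. apply Hij. apply (proj1 (NoDup_nth ys [])) in E; auto; lia.
  - intros i j Hi Hj. rewrite !HB by lia. rewrite T0, T1. apply Cr; apply nth_In; lia.
Qed.

Lemma pair_from_stream : 0 < ly -> forall e : nat -> dom M, (forall n, validf n e) ->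
  exists X Y, infinite_empty_pair M phi lx ly X Y.
Proof.
  intros Hly e He.
  set (tX := fun i => tup e (2 * i * ly)). set (tY := fun i => tup e ((2 * i + 1) * ly)).
  assert (Hall : forall i j, vertex M phi lx ly (tX i) /\ vertex M phi lx ly (tY i) /\
      (i <> j -> tX i <> tX j /\ tY i <> tY j) /\ ~ P2 M phi lx (tX i) (tY j)).
  { intros i j. destruct (He (2 * S (Nat.max i j) * ly)) as [V1 [V2 V3]].
    replace (2 * S (Nat.max i j) * ly / (2 * ly)) with (S (Nat.max i j)) in *
      by (apply (Nat.div_unique _ _ _ 0); lia).
    split; [|split; [|split]].
    - apply (V1 (2 * i)). lia.
    - apply (V1 (2 * i + 1)). lia.
    - intro Hij. apply V2; auto; lia.
    - apply V3; lia. }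
  exists (fun x => exists i, x = tX i), (fun y => exists i, y = tY i).
  assert (EX : forall i j, tX i = tX j -> i = j).
  { intros i j E. destruct (Nat.eq_dec i j); auto. exfalso. apply (proj1 (proj1 (proj2 (proj2 (Hall i j))) n)). auto. }
  assert (EY : forall i j, tY i = tY j -> i = j).
  { intros i j E. destruct (Nat.eq_dec i j); auto. exfalso. apply (proj2 (proj1 (proj2 (proj2 (Hall i j))) n)). auto. }
  split; [|split; [|split; [|split]]].
  - intros x [i Hi]. subst. apply (Hall i 0).
  - intros y [i Hi]. subst. apply (Hall i 0).
  - exists (fun i => exist (fun x => exists i, x = tX i) (tX i) (ex_intro _ i eq_refl)).
    intros i j E. apply EX. apply (f_equal (@proj1_sig _ _)) in E. exact E.
  - set (ix := fun x (H : exists i, x = tX i) => proj1_sig (constructive_indefinite_description _ H)).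
    set (iy := fun y (H : exists i, y = tY i) => proj1_sig (constructive_indefinite_description _ H)).
    assert (Hix : forall x H, x = tX (ix x H)).
    { intros x H. unfold ix. destruct (constructive_indefinite_description _ H). auto. }
    assert (Hiy : forall y H, y = tY (iy y H)).
    { intros y H. unfold iy. destruct (constructive_indefinite_description _ H). auto. }
    exists (fun x => exist (fun y => exists i, y = tY i) (tY (ix (proj1_sig x) (proj2_sig x)))
                       (ex_intro _ _ eq_refl)).
    exists (fun y => exist (fun x => exists i, x = tX i) (tX (iy (proj1_sig y) (proj2_sig y)))
                       (ex_intro _ _ eq_refl)).
    split.
    + intros [x Hx]. simpl. apply eq_sig_hprop. intros; apply proof_irrelevance.
      simpl. transitivity (tX (ix x Hx)); [| symmetry; apply Hix]. f_equal. apply EY.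
      symmetry. apply Hiy.
    + intros [y Hy]. simpl. apply eq_sig_hprop. intros; apply proof_irrelevance.
      simpl. transitivity (tY (iy y Hy)); [| symmetry; apply Hiy]. f_equal. apply EX.
      symmetry. apply Hix.
  - intros x y [i Hi] [j Hj]. subst. apply (Hall i j).
Qed.

End Syn.

From Stdlib Require Import Reals Lra.
Open Scope R_scope.


Lemma ehat_eq : forall L (M : structure L) phi lx (X : list (list (dom M))),
  ehat M phi lx X = ehatA (list (dom M)) (fun x y => ~ P2 M phi lx x y) X.
Proof. intros. induction X; simpl; auto. Qed.

Theorem mainTheorem2 (L : signature) (M : structure L) (phi : formula L)
    (lx ly : nat)
    (Hsat : aleph1_saturated M)
    (Hfree : free_below (lx + ly) phi)
    (Hneg : negation_assumption M phi lx ly)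
    (Hsimple : simple_formula M phi lx ly)
    (Hunstable : unstable_formula M phi lx ly)
    (Hnoempty : ~ exists X Y, infinite_empty_pair M phi lx ly X Y) :
  forall c0 : R, 0 < c0 ->
    exists N : nat, forall n k : nat, (N <= n)%nat ->
      is_alpha M phi lx ly n k -> INR k < c0 * (INR n) ^ 2.
Proof.
  intros c0 Hc0.
  assert (Hly : (0 < ly)%nat).
  { destruct Hunstable as [a [b [Ha [Hb Hab]]]].
    destruct ly as [|ly']; [|lia]. exfalso.
    assert (E : b 0%nat = b 1%nat).
    { specialize (Hb 0%nat) as H0. specialize (Hb 1%nat) as H1. unfold ytuple in *.
      destruct (b 0%nat); destruct (b 1%nat); simpl in *; try lia; auto. }
    assert (phiH M phi (a 0%nat) (b 1%nat)) by (apply Hab; lia).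
    rewrite <- E in H. apply Hab in H. lia. }
  apply NNPP. intro Hcon. apply Hnoempty.
  destruct (archimed_cor1 c0 Hc0) as [q [Hq1 Hq2]].
  assert (Hqc : 1 < INR q * c0).
  { assert (0 < INR q) by (apply lt_0_INR; auto).
    apply (Rmult_lt_compat_l (INR q)) in Hq1; auto.
    rewrite Rinv_r in Hq1 by lra. lra. }
  assert (Hcfg : forall m, exists xs ys, length xs = m /\ length ys = m /\ NoDup xs /\ NoDup ys /\
     (forall x, In x xs -> vertex M phi lx ly x) /\ (forall y, In y ys -> vertex M phi lx ly y) /\
     (forall x y, In x xs -> In y ys -> ~ P2 M phi lx x y)).
  { intro m. destruct (KST (list (dom M)) (fun x y => ~ P2 M phi lx x y) q m) as [N0 HN0]. lia.
    assert (Hex : exists n k, (N0 <= n)%nat /\ is_alpha M phi lx ly n k /\ ~ INR k < c0 * INR n ^ 2).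
    { apply NNPP. intro Hn. apply Hcon. exists N0. intros n k Hn0 Ha.
      apply NNPP. intro Hk. apply Hn. exists n, k. auto. }
    destruct Hex as [n [k [Hn0 [[[X [[HND [Hlen HV]] He]] _] Hk]]]].
    assert (Hnk : (length X * length X <= q * ehatA (list (dom M)) (fun x y => ~ P2 M phi lx x y) X)%nat).
    { rewrite <- ehat_eq, He, Hlen. apply INR_le. rewrite !mult_INR.
      apply Rnot_lt_le in Hk. assert (0 <= INR n) by apply pos_INR.
      assert (0 < INR q) by (apply lt_0_INR; auto). simpl in Hk. nra. }
    destruct (HN0 X HND) as [S [C [H1 [H2 [H3 [H4 [H5 [H6 H7]]]]]]]]; auto; try lia.
    exists S, C. split; [|split; [|split; [|split; [|split; [|split]]]]]; auto. }
  destruct (stream_exists L M phi lx ly Hfree Hsat Hly (Inv_nil L M phi lx ly Hly Hcfg)) as [e He].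
  apply (pair_from_stream L M phi lx ly Hly e He).
Qed.
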